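(* Let $G=(V,E)$ be a finite, simple, connected graph with $|V|\geq 3$ and let $d\in\mathrm{Der}(\mathcal{A}(G))$ with $d(e_i)=\sum_{k\in V}d_{ik}e_k$. If $d_{k\ell}\neq 0$ for some $k,\ell\in V$ with $k\neq\ell$, then there is a twin class $\mathcal{T}\subset V$ with $|\mathcal{T}|\geq 3$ such that $k,\ell\in\mathcal{T}$.
   Context: Throughout, $\mathbb{K}$ is a field of characteristic $0$. A graph $G=(V,E)$ has vertex set $V=\{1,\dots,n\}$ and is assumed finite, simple (no loops, no multiple edges) and connected. $\mathcal{N}(i)$ denotes the set of neighbors of vertex $i$, and $(a_{ij})$ is the adjacency matrix ($a_{ij}=1$ if $i,j$ are adjacent, $0$ otherwise). The evolution algebra $\mathcal{A}(G)$ is the $\mathbb{K}$-algebra with basis $\{e_i: i\in V\}$ and product $e_i\cdot e_i=\sum_{k\in V}a_{ik}e_k=\sum_{k\in\mathcal{N}(i)}e_k$ and $e_i\cdot e_j=0$ for $i\neq j$. A derivation of $\mathcal{A}(G)$ is a linear map $d:\mathcal{A}(G)\to\mathcal{A}(G)$ with $d(u\cdot v)=d(u)\cdot v+u\cdot d(v)$ for all $u,v$; $\mathrm{Der}(\mathcal{A}(G))$ is the space of derivations, and for $d$ in it we write $d(e_i)=\sum_{k\in V}d_{ik}e_k$. Two vertices $i,j$ are twins if $\mathcal{N}(i)=\mathcal{N}(j)$; this is an equivalence relation whose classes are called twin classes. *)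

(* Defs.v *)
From HB Require Import structures.
From mathcomp Require Import all_boot all_order all_algebra.
Set Implicit Arguments. Unset Strict Implicit. Unset Printing Implicit Defensive.
Import GRing.Theory.
Local Open Scope ring_scope.

Definition simple_graph (n : nat) (adj : rel 'I_n) : Prop :=
  symmetric adj /\ irreflexive adj.

Definition connected_graph (n : nat) (adj : rel 'I_n) : Prop :=
  forall i j : 'I_n, connect adj i j.

Definition adjK (K : fieldType) (n : nat) (adj : rel 'I_n) (i j : 'I_n) : K :=
  (adj i j)%:R.

(* Elements of the evolution algebra A(G) are coordinate row vectors
   w.r.t. the natural basis {e_i}: u = \sum_i u_i e_i. *)
Definition basis_vec (K : fieldType) (n : nat) (i : 'I_n) : 'rV[K]_n :=
  delta_mx 0 i.

(* Product of A(G): e_i e_i = \sum_k a_ik e_k, e_i e_j = 0 (i <> j),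
   extended bilinearly: (u v)_k = \sum_i u_i v_i a_ik. *)
Definition evo_mul (K : fieldType) (n : nat) (adj : rel 'I_n)
  (u v : 'rV[K]_n) : 'rV[K]_n :=
  \row_k \sum_i u 0 i * v 0 i * adjK K adj i k.

Definition is_derivation (K : fieldType) (n : nat) (adj : rel 'I_n)
  (d : {linear 'rV[K]_n -> 'rV[K]_n}) : Prop :=
  forall u v : 'rV[K]_n,
    d (evo_mul adj u v) = evo_mul adj (d u) v + evo_mul adj u (d v).

Definition der_coef (K : fieldType) (n : nat)
  (d : 'rV[K]_n -> 'rV[K]_n) (i k : 'I_n) : K :=
  d (basis_vec K i) 0 k.

Definition twins (n : nat) (adj : rel 'I_n) (i j : 'I_n) : bool :=
  [forall k, adj i k == adj j k].

Definition twin_class (n : nat) (adj : rel 'I_n) (i : 'I_n) : {set 'I_n} :=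
  [set j | twins adj i j].

Definition is_twin_class (n : nat) (adj : rel 'I_n) (T : {set 'I_n}) : Prop :=
  exists i, T = twin_class adj i.

(* Main.v *)
Require Import Defs.
From HB Require Import structures.
From mathcomp Require Import all_boot all_order all_algebra ring.
Import GRing.Theory.
Local Open Scope ring_scope.
Set Implicit Arguments.

Lemma sum_ind {K : fieldType} {n} (i : 'I_n) (f : 'I_n -> K) :
  \sum_p (basis_vec K i 0 p * f p) = f i.
Proof.
rewrite (bigD1 i) //= big1 ?addr0.
  by rewrite /basis_vec mxE !eqxx mul1r.
move=> p hp; by rewrite /basis_vec mxE eqxx /= (negbTE hp) mul0r.
Qed.

Lemma d_coef (K : fieldType) n (d : {linear 'rV[K]_n -> 'rV[K]_n}) u q :
  d u 0 q = \sum_p u 0 p * der_coef d p q.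
Proof.
rewrite {1}(row_sum_delta u) linear_sum summxE.
apply: eq_bigr => p _; by rewrite linearZ mxE.
Qed.

Lemma evo_ue (K : fieldType) n (adj : rel 'I_n) u j q :
  evo_mul adj u (basis_vec K j) 0 q = u 0 j * adjK K adj j q.
Proof.
rewrite mxE -(sum_ind j (fun p => u 0 p * adjK K adj p q)).
apply: eq_bigr => p _; by rewrite mulrAC mulrC mulrA.
Qed.

Lemma evo_eu (K : fieldType) n (adj : rel 'I_n) v i q :
  evo_mul adj (basis_vec K i) v 0 q = v 0 i * adjK K adj i q.
Proof.
rewrite mxE -(sum_ind i (fun p => v 0 p * adjK K adj p q)).
apply: eq_bigr => p _; by rewrite mulrA.
Qed.

Lemma E1 (K : fieldType) n (adj : rel 'I_n) (d : {linear 'rV[K]_n -> 'rV[K]_n})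
  (hd : is_derivation adj d) i j q : i != j ->
  der_coef d i j * adjK K adj j q + der_coef d j i * adjK K adj i q = 0.
Proof.
move=> hij.
have := congr1 (fun M : 'rV[K]_n => M 0 q) (hd (basis_vec K i) (basis_vec K j)).
rewrite /= mxE evo_ue evo_eu => <-.
rewrite d_coef big1 // => p _.
rewrite mxE big1 ?mul0r // => r _.
rewrite /basis_vec !mxE eqxx /=.
case: (r == i) / eqP => [->|]; last by rewrite !mul0r.
by move: hij; case: eqP => // _ _; rewrite /= mulr0 mul0r.
Qed.

Lemma E2 (K : fieldType) n (adj : rel 'I_n) (d : {linear 'rV[K]_n -> 'rV[K]_n})
  (hd : is_derivation adj d) i q :
  \sum_p adjK K adj i p * der_coef d p q = 2%:R * (der_coef d i i * adjK K adj i q).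
Proof.
have := congr1 (fun M : 'rV[K]_n => M 0 q) (hd (basis_vec K i) (basis_vec K i)).
rewrite /= mxE evo_ue evo_eu => H; rewrite mulr_natl mulr2n -H.
rewrite d_coef; apply: eq_bigr => p _; congr (_ * _).
rewrite mxE -(sum_ind i (fun r => adjK K adj r p)).
apply: eq_bigr => r _; rewrite /basis_vec !mxE eqxx /=.
by case: (r == i) / eqP => [->|]; rewrite ?mul1r ?mul0r.
Qed.

Lemma adjK_b (K : fieldType) n (adj : rel 'I_n) i j :
  adjK K adj i j = if adj i j then 1 else 0.
Proof. by rewrite /adjK; case: (adj i j). Qed.

Unset Implicit Arguments.

Theorem lemma3p5 (K : fieldType) (hK : [pchar K] =i pred0)
  (n : nat) (adj : rel 'I_n)
  (hsimple : simple_graph adj) (hconn : connected_graph adj)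
  (hn : (3 <= n)%N)
  (d : {linear 'rV[K]_n -> 'rV[K]_n}) (hd : is_derivation adj d)
  (k l : 'I_n) (hkl : k != l) (hdkl : der_coef d k l != 0) :
  exists T : {set 'I_n},
    [/\ is_twin_class adj T, (3 <= #|T|)%N, k \in T & l \in T].
Proof.
case: hsimple => hsym hirr.
have h2 : (2%:R : K) != 0.
  apply/negP => /eqP h; have := hK 2; by rewrite !inE /= h eqxx.
have [m0 hlm0] : exists m, adj l m.
  have /connectP [p hp hlast] := hconn l k.
  case: p hp hlast => [/= _ hkl'|m p /= /andP [h _] _]; last by exists m.
  by rewrite hkl' eqxx in hkl.
have hkm0 : adj k m0.
  have := E1 hd k l m0 hkl; rewrite !adjK_b hlm0.
  case: (adj k m0) => //; rewrite mulr1 mulr0 addr0 => /eqP.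
  by rewrite (negbTE hdkl).
have hdlk : der_coef d l k = - der_coef d k l.
  have := E1 hd k l m0 hkl; rewrite !adjK_b hlm0 hkm0 !mulr1 => /eqP.
  by rewrite addr_eq0 => /eqP ->; rewrite opprK.
have htw : forall m, adj k m = adj l m.
  move=> m; have := E1 hd k l m hkl; rewrite !adjK_b hdlk.
  case: (adj l m); case: (adj k m) => //=;
    rewrite ?mulr1 ?mulr0 ?addr0 ?add0r => /eqP; by rewrite ?oppr_eq0 (negbTE hdkl).
have nontwin0 : forall i j, ~~ twins adj j i -> (exists m, adj j m) ->
    der_coef d i j = 0.
  move=> i j hnt [mj hjm].
  have hij : i != j by apply: contraNneq hnt => ->; apply/forallP => x.
  move/forallPn: hnt => [m hm].
  have := E1 hd i j m hij; rewrite !adjK_b.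
  move: hm; case: (adj j m); case: (adj i m) => //= _;
    rewrite ?mulr1 ?mulr0 ?addr0 ?add0r // => hji.
  have := E1 hd i j mj hij; by rewrite !adjK_b hjm hji mul0r addr0 mulr1.
have twkl : forall p, twins adj k p = twins adj l p.
  move=> p; apply: eq_forallb => m; by rewrite htw.
have hDkk : der_coef d k k = der_coef d l l.
  have e1 := E2 hd k m0; have e2 := E2 hd l m0.
  have : 2%:R * (der_coef d k k * adjK K adj k m0) =
         2%:R * (der_coef d l l * adjK K adj l m0).
    rewrite -e1 -e2; apply: eq_bigr => p _; by rewrite /adjK htw.
  by move/(mulfI h2); rewrite !adjK_b hkm0 hlm0 !mulr1.
have hm0k : adj m0 k by rewrite hsym.
have hm0l : adj m0 l by rewrite hsym.
exists (twin_class adj k); split.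
- by exists k.
- case: (leqP 3 #|twin_class adj k|) => // hlt; exfalso.
  have only2 : forall p, p != k -> p != l -> ~~ twins adj k p.
    move=> p hpk hpl; apply/negP => tp.
    have hsub : p |: [set k; l] \subset twin_class adj k.
      apply/subsetP => x; rewrite !inE => /orP [/eqP ->|/orP [/eqP ->|/eqP ->]].
      + by [].
      + by apply/forallP.
      + by apply/forallP => y; rewrite htw.
    have := subset_leq_card hsub.
    rewrite cardsU1 cards2 !inE hkl (negbTE hpk) (negbTE hpl) /=.
    by rewrite leqNgt hlt.
  have s1 := E2 hd m0 k; have s2 := E2 hd m0 l.
  have hlk : l != k by rewrite eq_sym.
  rewrite (bigD1 k) // (bigD1 l) /= ?hlk // big1 in s1; last first.
    move=> p /andP [hpk hpl]; rewrite (nontwin0 p k) ?mulr0 //.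
      exact: only2. by exists m0.
  rewrite (bigD1 k) // (bigD1 l) /= ?hlk // big1 in s2; last first.
    move=> p /andP [hpk hpl]; rewrite (nontwin0 p l) ?mulr0 //.
      rewrite -twkl; exact: only2. by exists m0.
  move: s1 s2; rewrite !adjK_b hm0k hm0l !mul1r !addr0 => s1 s2.
  have H : der_coef d l l + - der_coef d k l = der_coef d k l + der_coef d l l.
    by rewrite -hdlk -hDkk s1 -s2 hDkk.
  have : 2%:R * der_coef d k l = 0.
    rewrite (_ : 2%:R * der_coef d k l =
      (der_coef d k l + der_coef d l l) - (der_coef d l l + - der_coef d k l)); last by ring.
    by rewrite H subrr.
  by move/eqP; rewrite mulf_eq0 (negbTE h2) (negbTE hdkl).
- by rewrite inE; apply/forallP.
- by rewrite inE; apply/forallP => y; rewrite htw.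
Qed.
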